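(* Let $(\alpha_1,\alpha_2)\in\mathbb{C}^2$ and $p_1,p_2\in\mathbb{C}[u]\setminus\{0\}$, and let $\mathcal{A}=\mathcal{A}_{\alpha_1,\alpha_2}(p_1,p_2)$ and $\tilde{\mathcal{A}}=\tilde{\mathcal{A}}_{\alpha_1,\alpha_2}(p_1,p_2)$. The following are equivalent: (i) $\mathcal{A}\neq\{0\}$; (ii) the generator $H$ is algebraically independent over $\mathbb{C}$ in $\tilde{\mathcal{A}}$; (iii) $p_1(u+\alpha_2/2)\,p_2(u+\alpha_1/2)=p_1(u-\alpha_2/2)\,p_2(u-\alpha_1/2)$ in $\mathbb{C}[u]$.
   Context: $\tilde{\mathcal{A}}_{\alpha_1,\alpha_2}(p_1,p_2)$ is the associative $\mathbb{C}$-algebra generated by $H,X_1^\pm,X_2^\pm$ with relations, for $i=1,2$: $HX_i^\pm-X_i^\pm H=\pm\alpha_iX_i^\pm$, $X_i^+X_i^-=p_i(H-\alpha_i/2)$, $X_i^-X_i^+=p_i(H+\alpha_i/2)$, and $X_1^+X_2^-=X_2^-X_1^+$, $X_1^-X_2^+=X_2^+X_1^-$. $\mathcal{A}_{\alpha_1,\alpha_2}(p_1,p_2)=\tilde{\mathcal{A}}/\mathcal{I}$ where $\mathcal{I}$ is the ideal of all $a\in\tilde{\mathcal{A}}$ such that $f(H)a=0$ for some nonzero $f\in\mathbb{C}[u]$. *)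

(* Defs.v *)
From mathcomp Require Import all_boot all_algebra.
From mathcomp Require Import Rstruct complex.
Set Implicit Arguments. Unset Strict Implicit. Unset Printing Implicit Defensive.
Import GRing.Theory.
Local Open Scope ring_scope.

Definition C : fieldType := (Rdefinitions.R)[i].

Inductive gen := GH | GX1p | GX1m | GX2p | GX2m.

(* Formal expressions of the free associative unital C-algebra on the
   generators: Cst c stands for c * 1.  Scalar multiplication c a is
   Mul (Cst c) a; subtraction a - b is Add a (Mul (Cst (-1)) b). *)
Inductive term :=
| Cst of C
| Gen of gen
| Add of term & term
| Mul of term & term.

Definition Sub (a b : term) : term := Add a (Mul (Cst (-1)) b).
Definition Scal (c : C) (a : term) : term := Mul (Cst c) a.

Definition peval (f : {poly C}) (t : term) : term :=
  foldr (fun c acc => Add (Cst c) (Mul acc t)) (Cst 0) (polyseq f).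

Definition tH := Gen GH.
Definition tX1p := Gen GX1p.
Definition tX1m := Gen GX1m.
Definition tX2p := Gen GX2p.
Definition tX2m := Gen GX2m.

(* The quotient of [term] by [eqAt] is exactly the algebra presented by
   generators and relations. *)
Inductive eqAt (a1 a2 : C) (p1 p2 : {poly C}) : term -> term -> Prop :=
| eqA_refl t : eqAt a1 a2 p1 p2 t t
| eqA_sym t u : eqAt a1 a2 p1 p2 t u -> eqAt a1 a2 p1 p2 u t
| eqA_trans t u v : eqAt a1 a2 p1 p2 t u -> eqAt a1 a2 p1 p2 u v ->
    eqAt a1 a2 p1 p2 t v
| eqA_Add t t' u u' : eqAt a1 a2 p1 p2 t t' -> eqAt a1 a2 p1 p2 u u' ->
    eqAt a1 a2 p1 p2 (Add t u) (Add t' u')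
| eqA_Mul t t' u u' : eqAt a1 a2 p1 p2 t t' -> eqAt a1 a2 p1 p2 u u' ->
    eqAt a1 a2 p1 p2 (Mul t u) (Mul t' u')
| eqA_AddA t u v : eqAt a1 a2 p1 p2 (Add t (Add u v)) (Add (Add t u) v)
| eqA_AddC t u : eqAt a1 a2 p1 p2 (Add t u) (Add u t)
| eqA_Add0 t : eqAt a1 a2 p1 p2 (Add (Cst 0) t) t
| eqA_MulA t u v : eqAt a1 a2 p1 p2 (Mul t (Mul u v)) (Mul (Mul t u) v)
| eqA_Mul1l t : eqAt a1 a2 p1 p2 (Mul (Cst 1) t) t
| eqA_Mul1r t : eqAt a1 a2 p1 p2 (Mul t (Cst 1)) t
| eqA_Mul0 t : eqAt a1 a2 p1 p2 (Mul (Cst 0) t) (Cst 0)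
| eqA_MulDl t u v : eqAt a1 a2 p1 p2 (Mul (Add t u) v) (Add (Mul t v) (Mul u v))
| eqA_MulDr t u v : eqAt a1 a2 p1 p2 (Mul t (Add u v)) (Add (Mul t u) (Mul t v))
| eqA_CstD c d : eqAt a1 a2 p1 p2 (Cst (c + d)) (Add (Cst c) (Cst d))
| eqA_CstM c d : eqAt a1 a2 p1 p2 (Cst (c * d)) (Mul (Cst c) (Cst d))
| eqA_CstC c t : eqAt a1 a2 p1 p2 (Mul (Cst c) t) (Mul t (Cst c))
| eqA_HX1p : eqAt a1 a2 p1 p2 (Sub (Mul tH tX1p) (Mul tX1p tH)) (Scal a1 tX1p)
| eqA_HX1m : eqAt a1 a2 p1 p2 (Sub (Mul tH tX1m) (Mul tX1m tH)) (Scal (- a1) tX1m)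
| eqA_HX2p : eqAt a1 a2 p1 p2 (Sub (Mul tH tX2p) (Mul tX2p tH)) (Scal a2 tX2p)
| eqA_HX2m : eqAt a1 a2 p1 p2 (Sub (Mul tH tX2m) (Mul tX2m tH)) (Scal (- a2) tX2m)
| eqA_X1pm : eqAt a1 a2 p1 p2 (Mul tX1p tX1m) (peval p1 (Sub tH (Cst (a1 / 2))))
| eqA_X1mp : eqAt a1 a2 p1 p2 (Mul tX1m tX1p) (peval p1 (Add tH (Cst (a1 / 2))))
| eqA_X2pm : eqAt a1 a2 p1 p2 (Mul tX2p tX2m) (peval p2 (Sub tH (Cst (a2 / 2))))
| eqA_X2mp : eqAt a1 a2 p1 p2 (Mul tX2m tX2p) (peval p2 (Add tH (Cst (a2 / 2))))
| eqA_X1pX2m : eqAt a1 a2 p1 p2 (Mul tX1p tX2m) (Mul tX2m tX1p)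
| eqA_X1mX2p : eqAt a1 a2 p1 p2 (Mul tX1m tX2p) (Mul tX2p tX1m).

Definition in_idealI (a1 a2 : C) (p1 p2 : {poly C}) (a : term) : Prop :=
  exists f : {poly C}, f != 0 /\ eqAt a1 a2 p1 p2 (Mul (peval f tH) a) (Cst 0).

(* A = A~ / I is nonzero: some element of A~ is not in I. *)
Definition A_nonzero (a1 a2 : C) (p1 p2 : {poly C}) : Prop :=
  ~ (forall a : term, in_idealI a1 a2 p1 p2 a).

Definition H_alg_indep (a1 a2 : C) (p1 p2 : {poly C}) : Prop :=
  forall f : {poly C}, f != 0 -> ~ eqAt a1 a2 p1 p2 (peval f tH) (Cst 0).

Definition shiftp (q : {poly C}) (c : C) : {poly C} := q \Po ('X + c%:P).

(* Main.v *)
From Stdlib Require Import Setoid Morphisms FunctionalExtensionality.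
From Stdlib Require Ncring Ncring_tac.
Require Import Defs.
From mathcomp Require Import all_boot all_algebra ring.
From mathcomp Require Import Rstruct complex.
Import GRing.Theory.
Local Open Scope ring_scope.

Definition Opp (t : term) := Mul (Cst (-1)) t.
Arguments shiftp : simpl never.
Lemma two_nz : (2 : C) != 0.
Proof. have : (2 : Rdefinitions.R[i]) != 0 by rewrite Num.Theory.pnatr_eq0. done. Qed.
Ltac fd := field; first [done | exact: two_nz].

Lemma shiftpM (p q : {poly C}) c : shiftp (p * q) c = shiftp p c * shiftp q c.
Proof. exact: comp_polyM. Qed.
Lemma shiftpD (p q : {poly C}) c : shiftp (p + q) c = shiftp p c + shiftp q c.
Proof. exact: comp_polyD. Qed.
Lemma shiftpC (d c : C) : shiftp d%:P c = d%:P.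
Proof. exact: comp_polyC. Qed.
Lemma shiftpX (c : C) : shiftp 'X c = 'X + c%:P.
Proof. exact: comp_polyX. Qed.
Lemma shiftpK (p : {poly C}) c d : shiftp (shiftp p c) d = shiftp p (c + d).
Proof.
rewrite /shiftp -comp_polyA comp_polyD comp_polyX comp_polyC.
by rewrite -addrA -polyCD (addrC d).
Qed.
Lemma shiftp0 (p : {poly C}) : shiftp p 0 = p.
Proof. by rewrite /shiftp addr0 comp_polyXr. Qed.
Lemma shiftp_eq (p : {poly C}) c d : c = d -> shiftp p c = shiftp p d.
Proof. by move->. Qed.

Section Alg.
Variables (a1 a2 : C) (p1 p2 : {poly C}).
Local Notation E := (eqAt a1 a2 p1 p2).
#[local] Hint Resolve eqA_refl : core.
#[local] Instance E_equiv : Equivalence E.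
Proof. split. exact: eqA_refl. exact: eqA_sym. exact: eqA_trans. Qed.
#[local] Instance Add_prop : Proper (E ==> E ==> E) Add.
Proof. move=> ? ? h ? ? h'; exact: eqA_Add. Qed.
#[local] Instance Mul_prop : Proper (E ==> E ==> E) Mul.
Proof. move=> ? ? h ? ? h'; exact: eqA_Mul. Qed.
#[local] Instance Sub_prop : Proper (E ==> E ==> E) Defs.Sub.
Proof. move=> ? ? h ? ? h'; apply: eqA_Add; first exact: h; apply: eqA_Mul; [exact: eqA_refl|exact: h']. Qed.
#[local] Instance Opp_prop : Proper (E ==> E) Opp.
Proof. move=> ? ? h; apply: eqA_Mul; [exact: eqA_refl|exact: h]. Qed.
#[local] Instance ops : @Ncring.Ring_ops term (Cst 0) (Cst 1) Add Mul Defs.Sub Opp E := {}.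
Lemma oppdef x : E (Add x (Opp x)) (Cst 0).
Proof.
rewrite -{1}[x]eqA_Mul1l /Opp -eqA_MulDl -eqA_CstD subrr.
exact: eqA_Mul0.
Qed.
#[local] Instance ring_inst : @Ncring.Ring term _ _ _ _ _ _ _ ops.
Proof.
split; try exact _.
all: intros; cbv [Algebra_syntax.addition Algebra_syntax.multiplication Algebra_syntax.zero Algebra_syntax.one Algebra_syntax.subtraction Algebra_syntax.opposite Algebra_syntax.equality Ncring.add_notation Ncring.mul_notation Ncring.zero_notation Ncring.one_notation Ncring.sub_notation Ncring.opp_notation Ncring.eq_notation ops].
all: try solve [constructor].
exact: oppdef.
Qed.
Ltac nc := Ncring_tac.non_commutative_ring.

Lemma peval0 t : peval 0 t = Cst 0.
Proof. by rewrite /peval polyseq0. Qed.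

Lemma peval_cons p c t : E (peval (p * 'X + c%:P) t) (Add (Cst c) (Mul (peval p t) t)).
Proof.
have [->|hp] := eqVneq p 0.
  rewrite mul0r add0r peval0 /peval polyseqC.
  have [->|hc] := eqVneq c 0 => /=.
    by rewrite eqA_Mul0 eqA_Add0.
  reflexivity.
rewrite -cons_poly_def /peval polyseq_cons nil_poly hp /=; reflexivity.
Qed.

Lemma peval_C c t : E (peval c%:P t) (Cst c).
Proof.
have -> : c%:P = 0 * 'X + c%:P by rewrite mul0r add0r.
by rewrite peval_cons peval0 eqA_Mul0 eqA_AddC eqA_Add0.
Qed.

Lemma Add0r x : E (Add x (Cst 0)) x.
Proof. by rewrite eqA_AddC eqA_Add0. Qed.
Lemma Mul0r x : E (Mul x (Cst 0)) (Cst 0).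
Proof. by rewrite -eqA_CstC eqA_Mul0. Qed.

Lemma peval_add f g t : E (peval (f + g) t) (Add (peval f t) (peval g t)).
Proof.
elim/poly_ind: f g => [|f c IH] g.
  by rewrite add0r peval0 eqA_Add0.
elim/poly_ind: g => [|g d _].
  by rewrite addr0 peval0 Add0r.
have -> : f * 'X + c%:P + (g * 'X + d%:P) = (f + g) * 'X + (c + d)%:P.
  by rewrite polyCD mulrDl addrACA.
rewrite !peval_cons IH eqA_CstD; nc.
Qed.

Lemma peval_comm x t t' f : (forall c, E (Mul x (Cst c)) (Mul (Cst c) x)) ->
  E (Mul x t) (Mul t' x) -> E (Mul x (peval f t)) (Mul (peval f t') x).
Proof.
move=> hc hxt; elim/poly_ind: f => [|f c IH].
  by rewrite !peval0 hc.
rewrite !peval_cons.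
transitivity (Add (Mul x (Cst c)) (Mul (Mul x (peval f t)) t)); first nc.
rewrite hc IH.
transitivity (Add (Mul (Cst c) x) (Mul (peval f t') (Mul x t))); first nc.
rewrite hxt; nc.
Qed.

Lemma peval_commt t f : E (Mul t (peval f t)) (Mul (peval f t) t).
Proof.
apply: peval_comm; last reflexivity.
move=> c; symmetry; exact: eqA_CstC.
Qed.

Lemma peval_mulC c g t : E (peval (c%:P * g) t) (Mul (Cst c) (peval g t)).
Proof.
elim/poly_ind: g => [|g d IH].
  by rewrite mulr0 peval0 -eqA_CstM mulr0.
have -> : c%:P * (g * 'X + d%:P) = (c%:P * g) * 'X + (c * d)%:P.
  by rewrite polyCM mulrDr mulrA.
rewrite !peval_cons IH eqA_CstM; nc.
Qed.

Lemma peval_mul f g t : E (peval (f * g) t) (Mul (peval f t) (peval g t)).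
Proof.
elim/poly_ind: f g => [|f c IH] g.
  by rewrite mul0r peval0 eqA_Mul0.
have -> : (f * 'X + c%:P) * g = ((f * g) * 'X + 0%:P) + c%:P * g.
  by rewrite addr0 mulrDl mulrAC.
rewrite peval_add peval_cons peval_mulC IH peval_cons.
transitivity (Add (Mul (Cst c) (peval g t)) (Mul (peval f t) (Mul (peval g t) t))); first nc.
rewrite -peval_commt; nc.
Qed.

Lemma peval_X t : E (peval 'X t) t.
Proof.
have -> : 'X = 1 * 'X + 0%:P :> {poly C} by rewrite mul1r addr0.
rewrite peval_cons -polyC1 peval_C eqA_Mul1l; exact: eqA_Add0.
Qed.

#[local] Instance peval_prop f : Proper (E ==> E) (peval f).
Proof.
move=> t t' h; elim/poly_ind: f => [|f c IH].
  by rewrite !peval0.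
by rewrite !peval_cons IH h.
Qed.

Lemma peval_comp f q t : E (peval (f \Po q) t) (peval f (peval q t)).
Proof.
elim/poly_ind: f => [|f c IH].
  by rewrite comp_poly0 !peval0.
rewrite comp_polyD comp_polyM comp_polyX comp_polyC.
rewrite peval_add peval_mul peval_C IH.
symmetry; rewrite peval_cons; nc.
Qed.

Lemma peval_shift f c t : E (peval (shiftp f c) t) (peval f (Add t (Cst c))).
Proof. by rewrite /shiftp peval_comp peval_add peval_X peval_C. Qed.


Lemma rel_comm x h a : E (Defs.Sub (Mul h x) (Mul x h)) (Scal a x) ->
  E (Mul x h) (Mul (Add h (Cst (-a))) x).
Proof.
rewrite /Scal => hr.
have e1 : E (Mul (Cst (-a)) x) (Opp (Mul (Cst a) x)).
  rewrite -mulN1r eqA_CstM /Opp; symmetry; exact: eqA_MulA.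
rewrite eqA_MulDl e1 -hr; nc.
Qed.

Lemma sub_cst t c : E (Defs.Sub t (Cst c)) (Add t (Cst (-c))).
Proof. by rewrite /Defs.Sub -eqA_CstM mulN1r. Qed.

Lemma gen_peval x a f : E (Defs.Sub (Mul tH x) (Mul x tH)) (Scal a x) ->
  E (Mul x (peval f tH)) (Mul (peval (shiftp f (-a)) tH) x).
Proof.
move=> hr; rewrite peval_shift.
apply: peval_comm; last exact: rel_comm.
move=> c; symmetry; exact: eqA_CstC.
Qed.

Local Notation P f := (peval f tH).

Lemma key :
  E (P (shiftp (shiftp p2 (a2/2)) (-a1) * shiftp p1 (-(a1/2))))
    (P (shiftp (shiftp p1 (-(a1/2))) a2 * shiftp p2 (a2/2))).
Proof.
have r1 : E (Mul tX1p tX1m) (P (shiftp p1 (-(a1/2)))).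
  by rewrite eqA_X1pm sub_cst peval_shift.
have r2 : E (Mul tX2m tX2p) (P (shiftp p2 (a2/2))).
  by rewrite eqA_X2mp peval_shift.
have c1 f : E (Mul tX1p (P f)) (Mul (P (shiftp f (-a1))) tX1p).
  apply: gen_peval; exact: eqA_HX1p.
have c2 f : E (Mul tX2m (P f)) (Mul (P (shiftp f a2)) tX2m).
  have := @gen_peval tX2m (-a2) f; rewrite opprK; apply; exact: eqA_HX2m.
set W := Mul (Mul tX1p tX2m) (Mul tX2p tX1m).
have w1 : E W (Mul (P (shiftp (shiftp p2 (a2/2)) (-a1))) (P (shiftp p1 (-(a1/2))))).
  transitivity (Mul (Mul tX1p (Mul tX2m tX2p)) tX1m); first (rewrite /W; nc).
  rewrite r2 c1.
  transitivity (Mul (P (shiftp (shiftp p2 (a2/2)) (-a1))) (Mul tX1p tX1m)); first nc.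
  by rewrite r1.
have w2 : E W (Mul (P (shiftp (shiftp p1 (-(a1/2))) a2)) (P (shiftp p2 (a2/2)))).
  rewrite /W eqA_X1pX2m -eqA_X1mX2p.
  transitivity (Mul (Mul tX2m (Mul tX1p tX1m)) tX2p); first nc.
  rewrite r1 c2.
  transitivity (Mul (P (shiftp (shiftp p1 (-(a1/2))) a2)) (Mul tX2m tX2p)); first nc.
  by rewrite r2.
by rewrite !peval_mul -w1 -w2.
Qed.

Lemma key0 (A B : {poly C}) : E (P A) (P B) -> E (P (A - B)) (Cst 0).
Proof.
move=> h.
have -> : A - B = A + (-1)%:P * B by rewrite polyCN polyC1 mulN1r.
rewrite peval_add peval_mulC h; exact: oppdef.
Qed.

Lemma alg_to_eq : H_alg_indep a1 a2 p1 p2 ->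
  shiftp p1 (a2 / 2) * shiftp p2 (a1 / 2)
  = shiftp p1 (- (a2 / 2)) * shiftp p2 (- (a1 / 2)).
Proof.
move=> hind.
have hAB : shiftp (shiftp p2 (a2/2)) (-a1) * shiftp p1 (-(a1/2)) =
           shiftp (shiftp p1 (-(a1/2))) a2 * shiftp p2 (a2/2).
  case: (eqVneq (shiftp (shiftp p2 (a2/2)) (-a1) * shiftp p1 (-(a1/2)) -
           shiftp (shiftp p1 (-(a1/2))) a2 * shiftp p2 (a2/2)) 0) => [/eqP|hne].
    by rewrite subr_eq0 => /eqP.
  by case: (hind _ hne (key0 _ _ key)).
have hk := f_equal (shiftp ^~ (a1/2 - a2/2)) hAB.
rewrite /= !shiftpM !shiftpK in hk.
have f1 : a2/2 + (-a1 + (a1/2 - a2/2)) = -(a1/2) by fd.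
have f2 : -(a1/2) + (a1/2 - a2/2) = -(a2/2) by fd.
have f3 : -(a1/2) + (a2 + (a1/2 - a2/2)) = a2/2 by fd.
have f4 : a2/2 + (a1/2 - a2/2) = a1/2 by fd.
rewrite f1 f2 f3 f4 in hk.
by rewrite -hk mulrC.
Qed.

Lemma kill f a : E (peval f tH) (Cst 0) -> E (Mul (peval f tH) a) (Cst 0).
Proof. by move=> h; rewrite h eqA_Mul0. Qed.

Lemma mul1_inv x y : E (Mul x (Cst 1)) y -> E x y.
Proof. by rewrite eqA_Mul1r. Qed.

End Alg.

Section Model.
Variables (a1 a2 : C) (p1 p2 : {poly C}).
Hypothesis hiii : shiftp p1 (a2 / 2) * shiftp p2 (a1 / 2)
         = shiftp p1 (- (a2 / 2)) * shiftp p2 (- (a1 / 2)).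

Fixpoint interp (t : term) : {poly C} -> {poly C} :=
  match t with
  | Cst c => fun g => c%:P * g
  | Gen GH => fun g => 'X * g
  | Gen GX1p => fun g => shiftp g (-a1)
  | Gen GX1m => fun g => shiftp p1 (a1/2) * shiftp g a1
  | Gen GX2p => fun g => shiftp p2 (-(a2/2)) * shiftp g (-a2)
  | Gen GX2m => fun g => shiftp g a2
  | Add t u => fun g => interp t g + interp u g
  | Mul t u => fun g => interp t (interp u g)
  end.

Lemma interp_add t g h : interp t (g + h) = interp t g + interp t h.
Proof.
elim: t g h => [c|[]|t IHt u IHu|t IHt u IHu] g h /=;
  rewrite ?shiftpD ?mulrDr ?IHt ?IHu //.
by rewrite addrACA.
Qed.

Lemma interp_scal t c g : interp t (c%:P * g) = c%:P * interp t g.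
Proof.
elim: t g => [d|[]|t IHt u IHu|t IHt u IHu] g /=;
  rewrite ?shiftpM ?shiftpC ?IHt ?IHu ?mulrDr //; ring.
Qed.

Lemma interp_foldr s t q g : (forall g, interp t g = q * g) ->
  interp (foldr (fun c acc => Add (Cst c) (Mul acc t)) (Cst 0) s) g = (Poly s \Po q) * g.
Proof.
move=> ht; elim: s g => [|c s IH] g /=.
  by rewrite comp_poly0 polyC0 !mul0r.
rewrite cons_poly_def comp_polyD comp_polyM comp_polyX comp_polyC ht IH; ring.
Qed.

Lemma interp_peval f t q g : (forall g, interp t g = q * g) ->
  interp (peval f t) g = (f \Po q) * g.
Proof. move=> ht; rewrite /peval; erewrite interp_foldr; last exact: ht. by rewrite polyseqK. Qed.

Lemma interp_H_shift c g : interp (Add tH (Cst c)) g = ('X + c%:P) * g.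
Proof. by rewrite /= mulrDl. Qed.

Lemma interp_Sub_shift c g : interp (Defs.Sub tH (Cst c)) g = ('X + (-c)%:P) * g.
Proof. rewrite /= !polyCN polyC1; ring. Qed.

Lemma interp_H g : interp tH g = 'X * g.
Proof. by []. Qed.

Lemma sound t u : eqAt a1 a2 p1 p2 t u -> interp t = interp u.
Proof.
elim=> {t u}.
- by [].
- by move=> t u _ ->.
- by move=> t u v _ -> _ ->.
- by move=> t t' u u' _ e1 _ e2 /=; rewrite e1 e2.
- by move=> t t' u u' _ e1 _ e2 /=; rewrite e1 e2.
all: intros; apply: functional_extensionality => g /=.
- by rewrite addrA.
- by rewrite addrC.
- by rewrite polyC0 mul0r add0r.
- by [].
- by rewrite polyC1 mul1r.
- by rewrite polyC1 mul1r.
- by rewrite polyC0 !mul0r.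
- by [].
- by rewrite interp_add.
- by rewrite polyCD mulrDl.
- by rewrite polyCM mulrA.
- by rewrite interp_scal.
- rewrite shiftpM shiftpX !polyCN polyC1; ring.
- rewrite shiftpM shiftpX !polyCN polyC1; ring.
- rewrite shiftpM shiftpX !polyCN polyC1; ring.
- rewrite shiftpM shiftpX !polyCN polyC1; ring.
- rewrite (interp_peval _ _ _ _ (interp_Sub_shift _)) shiftpM !shiftpK addrN shiftp0.
  congr (_ * _); apply: shiftp_eq; fd.
- rewrite (interp_peval _ _ _ _ (interp_H_shift _)) shiftpK addNr shiftp0 //.
- rewrite (interp_peval _ _ _ _ (interp_Sub_shift _)) shiftpK addrN shiftp0 //.
- rewrite (interp_peval _ _ _ _ (interp_H_shift _)) shiftpM !shiftpK addNr shiftp0.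
  congr (_ * _); apply: shiftp_eq; fd.
- by rewrite !shiftpK addrC.
- have hk := f_equal (shiftp ^~ (a1/2 - a2/2)) hiii.
  rewrite /= !shiftpM !shiftpK in hk.
  have e1 : a2/2 + (a1/2 - a2/2) = a1/2 by fd.
  have e2 : a1/2 + (a1/2 - a2/2) = -(a2/2) + a1 by fd.
  have e3 : -(a2/2) + (a1/2 - a2/2) = a1/2 + -a2 by fd.
  have e4 : -(a1/2) + (a1/2 - a2/2) = -(a2/2) by fd.
  rewrite e1 e2 e3 e4 in hk.
  rewrite !shiftpM !shiftpK (addrC (-a2)) !mulrA hk; ring.
Qed.

Lemma model_indep : H_alg_indep a1 a2 p1 p2.
Proof.
move=> f hf /sound h.
have := f_equal (fun F => F 1) h.
rewrite (interp_peval _ _ _ _ interp_H) comp_polyXr /= polyC0 !mulr1 => hf0.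
by rewrite hf0 eqxx in hf.
Qed.

End Model.

Theorem mainTheorem4 (a1 a2 : C) (p1 p2 : {poly C}) :
  p1 != 0 -> p2 != 0 ->
  [/\ (A_nonzero a1 a2 p1 p2 <-> H_alg_indep a1 a2 p1 p2),
      (H_alg_indep a1 a2 p1 p2 <->
         shiftp p1 (a2 / 2) * shiftp p2 (a1 / 2)
         = shiftp p1 (- (a2 / 2)) * shiftp p2 (- (a1 / 2)))
    & (A_nonzero a1 a2 p1 p2 <->
         shiftp p1 (a2 / 2) * shiftp p2 (a1 / 2)
         = shiftp p1 (- (a2 / 2)) * shiftp p2 (- (a1 / 2)))].
Proof.
move=> _ _.
have i2 : A_nonzero a1 a2 p1 p2 <-> H_alg_indep a1 a2 p1 p2.
  split.
  - move=> hA f hf hE; apply: hA => a; exists f; split => //.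
    exact: kill.
  - move=> hind hall; have [f [hf hE]] := hall (Cst 1).
    apply: (hind f hf); exact: mul1_inv.
have i3 : H_alg_indep a1 a2 p1 p2 <->
         shiftp p1 (a2 / 2) * shiftp p2 (a1 / 2)
         = shiftp p1 (- (a2 / 2)) * shiftp p2 (- (a1 / 2)).
  split; [exact: alg_to_eq | exact: model_indep].
split => //.
split => h; [apply/i3/i2 | apply/i2/i3]; exact: h.
Qed.
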